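(* Let $k$ be a fixed complex number. For every integer $n>0$, $$(\Lambda_A\ast\beta_k)(n)=A(n)\beta_k(n)-\beta_{k+1}(n).$$
   Context: $A(n)=\sum_{p^\alpha\parallel n}\alpha p$ is the sum of the prime factors of $n$ counted with multiplicity. $\Lambda_A(n)=p$ if $n=p^k$ for some prime $p$ and integer $k\geq1$, and $0$ otherwise. $\beta_k(n)=\sum_{p\mid n}p^k$ (sum over distinct primes dividing $n$). $\ast$ is Dirichlet convolution $(F\ast G)(n)=\sum_{d\mid n}F(d)G(n/d)$. *)

(* Defs.v *)
From Stdlib Require Import Reals.
From Coquelicot Require Import Coquelicot.
From mathcomp Require Import ssreflect ssrfun ssrbool eqtype ssrnat seq div prime bigop.

Set Implicit Arguments. Unset Strict Implicit. Unset Printing Implicit Defensive.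

Definition Afun (n : nat) : nat := \sum_(p <- primes n) (logn p n * p)%N.

(* Lambda_A(n) = p if n = p^k (p prime, k >= 1), 0 otherwise. *)
Definition LambdaA (n : nat) : nat :=
  \sum_(p <- primes n | n == (p ^ logn p n)%N) p.

Definition cpow (x : R) (s : C) : C :=
  (exp (Re s * ln x) * cos (Im s * ln x), exp (Re s * ln x) * sin (Im s * ln x))%R.

Definition beta (k : C) (n : nat) : C :=
  \big[Cplus/RtoC 0]_(p <- primes n) cpow (INR p) k.

Definition dconv (F G : nat -> C) (n : nat) : C :=
  \big[Cplus/RtoC 0]_(d <- divisors n) Cmult (F d) (G (n %/ d)).

(* Main.v *)
Require Import Defs.
From HB Require Import structures.
From Stdlib Require Import Reals Lra.
From Coquelicot Require Import Coquelicot.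
From mathcomp Require Import ssreflect ssrfun ssrbool eqtype ssrnat seq div prime bigop.

Module NatPart.
Local Open Scope nat_scope.
Section Reindex.
Variables (M : Type) (idx : M) (op : Monoid.com_law idx).

Lemma reindex (G : nat -> nat -> M) (n : nat) : (0 < n)%N ->
  \big[op/idx]_(d <- divisors n) \big[op/idx]_(p <- primes d | d == p ^ logn p d) G p d
  = \big[op/idx]_(p <- primes n) \big[op/idx]_(j <- iota 1 (logn p n)) G p (p ^ j).
Proof.
move=> n0.
rewrite (eq_big_seq (fun d => \big[op/idx]_(p <- primes n | (p \in primes d) && (d == p ^ logn p d)) G p d)); last first.
  move=> d Hd; rewrite -big_filter_cond; apply: perm_big.
  apply: uniq_perm; [exact: primes_uniq | exact/filter_uniq/primes_uniq|].
  move=> p; rewrite mem_filter andb_idr // !mem_primes => /and3P[pp d0 pd].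
  rewrite pp n0 /=; apply: dvdn_trans pd _; by rewrite -dvdn_divisors in Hd.
under eq_bigr do rewrite big_mkcond.
rewrite exchange_big; apply: eq_big_seq => p Hp /=.
rewrite -big_mkcond -big_filter.
have pp : prime p by move: Hp; rewrite mem_primes => /andP[].
have p1 : 1 < p by apply: prime_gt1.
rewrite -(big_map (expn p) xpredT (G p)).
apply: perm_big; apply: uniq_perm.
- exact/filter_uniq/divisors_uniq.
- by rewrite (map_inj_uniq (expnI p1)) iota_uniq.
move=> d; rewrite mem_filter -dvdn_divisors //; apply/andP/mapP.
- case=> /andP[pd /eqP de] dn; exists (logn p d) => //.
  rewrite mem_iota add1n ltnS logn_gt0 pd /= -pfactor_dvdn // -de //.
- case=> j; rewrite mem_iota add1n ltnS => /andP[j1 ja] ->.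
  rewrite pfactorK // eqxx andbT pfactor_dvdn // ja; split=> //.
  by rewrite mem_primes pp expn_gt0 (ltnW p1) dvdn_exp.
Qed.
End Reindex.


Lemma sum_pick (s : seq nat) x (F : nat -> nat) : uniq s -> x \in s ->
  (forall y, y \in s -> y != x -> F y = 0) -> \sum_(y <- s) F y = F x.
Proof.
move=> us xs H; rewrite (big_rem x) //= big1_seq ?addn0 // => y /andP[_].
rewrite (mem_rem_uniq x us) inE => /andP[yx ys]; exact: H.
Qed.

Lemma sum_iota_const a c : \sum_(j <- iota 1 a) c = a * c.
Proof.
have -> : iota 1 a = index_iota 1 a.+1 by rewrite /index_iota subn1.
by rewrite sum_nat_const_nat subn1.
Qed.

Lemma Afun_eq n : 0 < n -> Afun n = \sum_(d <- divisors n) LambdaA d.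
Proof.
move=> n0; rewrite /LambdaA (reindex _ _ _ (fun p _ => p) _ n0) /Afun.
by apply: eq_bigr => p _; rewrite sum_iota_const.
Qed.

Lemma key n q : 0 < n -> q \in primes n ->
  \sum_(d <- divisors n) LambdaA d * (q \notin primes (n %/ d)) = q.
Proof.
move=> n0 qn.
have [qp _ qdn] : [/\ prime q, 0 < n & q %| n] by apply/and3P; rewrite -mem_primes.
under eq_bigr do rewrite /LambdaA big_distrl /=.
rewrite (reindex _ _ _ (fun p d => p * (q \notin primes (n %/ d))) _ n0).
rewrite (@sum_pick _ q) ?primes_uniq //; last first.
  move=> p pn pq; have [pp _ pdn] : [/\ prime p, 0 < n & p %| n] by apply/and3P; rewrite -mem_primes.
  apply: big1_seq => j /andP[_ ]; rewrite mem_iota add1n ltnS => /andP[j1 ja].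
  have pjn : p ^ j %| n by rewrite pfactor_dvdn.
  have pj0 : 0 < p ^ j by rewrite expn_gt0 prime_gt0.
  have nd0 : 0 < n %/ p ^ j by rewrite divn_gt0 //; exact: dvdn_leq.
  rewrite mem_primes qp nd0 /=.
  suff -> : q %| n %/ p ^ j by rewrite muln0.
  move: qdn; rewrite -{1}(divnK pjn) Euclid_dvdM // Euclid_dvdX // (dvdn_prime2 qp pp) eq_sym (negbTE pq) /=.
  by rewrite orbF.
have q1 := prime_gt1 qp.
have a1 : 0 < logn q n by rewrite logn_gt0.
rewrite (@sum_pick _ (logn q n)) ?iota_uniq //.
- have qan : q ^ logn q n %| n by rewrite pfactor_dvdn.
  rewrite -logn_gt0 logn_div // pfactorK // subnn /=.
  by rewrite muln1.
- by rewrite mem_iota add1n ltnS a1 leqnn.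
move=> j; rewrite mem_iota add1n ltnS => /andP[j1 ja] jna.
have qjn : q ^ j %| n by rewrite pfactor_dvdn.
rewrite -logn_gt0 logn_div // pfactorK // subn_gt0.
by rewrite ltn_neqAle jna ja muln0.
Qed.

Lemma key2 n q : 0 < n -> q \in primes n ->
  \sum_(d <- divisors n) LambdaA d * (q \in primes (n %/ d)) + q = Afun n.
Proof.
move=> n0 qn; rewrite -{2}(@key n q n0 qn) -big_split /= (@Afun_eq n n0).
by apply: eq_bigr => d _; rewrite -mulnDr; case: (_ \in _); rewrite muln1.
Qed.
End NatPart.
Import NatPart.
HB.instance Definition _ := Monoid.isComLaw.Build C (RtoC 0) Cplus Cplus_assoc Cplus_comm Cplus_0_l.
HB.instance Definition _ := Monoid.isMulLaw.Build C (RtoC 0) Cmult Cmult_0_l Cmult_0_r.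
HB.instance Definition _ := Monoid.isAddLaw.Build C Cmult Cplus Cmult_plus_distr_r Cmult_plus_distr_l.

Definition CR (m : nat) : C := RtoC (INR m).

Lemma CR_add a b : CR (a + b)%N = (CR a + CR b)%C.
Proof. by rewrite /CR (plus_INR a b) RtoC_plus. Qed.
Lemma CR_mul a b : CR (a * b)%N = (CR a * CR b)%C.
Proof. by rewrite /CR (mult_INR a b) RtoC_mult. Qed.

Lemma CR_sum (s : seq nat) (F : nat -> nat) :
  CR (\sum_(i <- s) F i) = \big[Cplus/RtoC 0]_(i <- s) CR (F i).
Proof.
elim: s => [|x s IH]; first by rewrite !big_nil.
by rewrite !big_cons CR_add IH.
Qed.

Lemma cpow_succ (q : nat) k : (0 < q)%N ->
  cpow (INR q) (Cplus k (RtoC 1)) = Cmult (CR q) (cpow (INR q) k).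
Proof.
move=> q0; have qpos : (0 < INR q)%R by apply: lt_0_INR; apply/ltP.
rewrite /cpow /CR /=.
have -> : ((Re k + 1) * ln (INR q) = Re k * ln (INR q) + ln (INR q))%R by ring.
have -> : ((Im k + 0) = Im k)%R by ring.
rewrite exp_plus exp_ln //.
apply: injective_projections; rewrite /= ; ring.
Qed.

Lemma beta_div k n d : (0 < n)%N -> d \in divisors n ->
  beta k (n %/ d) = \big[Cplus/RtoC 0]_(q <- primes n)
     Cmult (CR (q \in primes (n %/ d))) (cpow (INR q) k).
Proof.
move=> n0 dn.
have dvd : (d %| n)%N by rewrite dvdn_divisors.
rewrite (eq_bigr (fun q => if q \in primes (n %/ d) then cpow (INR q) k else RtoC 0)); last first.
  move=> q _; case: (_ \in _); rewrite /CR /=; [exact: Cmult_1_l | exact: Cmult_0_l].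
rewrite -big_mkcond -big_filter /beta; apply: perm_big; apply: uniq_perm.
- exact: primes_uniq.
- exact/filter_uniq/primes_uniq.
move=> q; rewrite mem_filter andb_idr // !mem_primes => /and3P[qp nd qd].
by rewrite qp n0 (dvdn_trans qd (dvdn_div dvd)).
Qed.

Theorem theorem3p4 (k : C) (n : nat) :
  (0 < n)%N ->
  dconv (fun m => RtoC (INR (LambdaA m))) (beta k) n =
  Cminus (Cmult (RtoC (INR (Afun n))) (beta k n)) (beta (Cplus k (RtoC 1)) n).
Proof.
move=> n0; rewrite /dconv.
set w := fun q => cpow (INR q) k.
rewrite (eq_big_seq (fun d => \big[Cplus/RtoC 0]_(q <- primes n)
   Cmult (CR (LambdaA d)) (Cmult (CR (q \in primes (n %/ d))) (w q)))); last first.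
  by move=> d dn; rewrite (@beta_div k n d n0 dn) big_distrr.
rewrite exchange_big /=.
rewrite (eq_big_seq (fun q => Cmult (Cminus (CR (Afun n)) (CR q)) (w q))); last first.
  move=> q qn.
  rewrite (eq_bigr (fun d => Cmult (CR (LambdaA d * (q \in primes (n %/ d)))) (w q))); last first.
    by move=> d _; rewrite CR_mul Cmult_assoc.
  rewrite -big_distrl -CR_sum -(@key2 n q n0 qn) CR_add /=; ring.
rewrite /beta big_distrr.
rewrite (eq_big_seq (fun q => Cmult (CR q) (w q)) (r := primes n) (F1 := fun q => cpow (INR q) (k + RtoC 1))); last first.
  move=> q qn; apply: cpow_succ; apply: prime_gt0.
  by move: qn; rewrite mem_primes => /andP[].
have -> : \big[Cplus/RtoC 0]_(q <- primes n) Cmult (RtoC (INR (Afun n))) (cpow (INR q) k)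
   = Cplus (\big[Cplus/RtoC 0]_(q <- primes n) Cmult (Cminus (CR (Afun n)) (CR q)) (w q))
           (\big[Cplus/RtoC 0]_(q <- primes n) Cmult (CR q) (w q)).
  by rewrite -big_split; apply: eq_bigr => q _ /=; rewrite /w /CR; ring.
by rewrite /Cminus -Cplus_assoc Cplus_opp_r Cplus_0_r.
Qed.
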